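(* Let $g \geq 1$, let $B(g)$ be the set of binary strings $b=(b_1,\dots,b_{2g})$ of length $2g$ with $b_i \neq b_{i+g}$ for $1 \le i \le g$, and let $E'(g)$ be the set of orbits of $B(g)$ under cyclic shifts whose elements have period $2g$. Then \[ |E'(g)| = \frac{P(2g)}{2g} = \frac{1}{2g} \sum_{\substack{x\mid g \\ x \text{ odd}}} \mu(x)\,2^{g/x}, \] where $P(2g)$ is the number of elements of $B(g)$ of period $2g$.
   Context: The cyclic group of order $2g$ acts on binary strings of length $2g$ by cyclic shifts, preserving $B(g)$. The period of a binary string is the smallest positive integer $k$ such that the string is fixed by the cyclic shift by $k$; period is constant on orbits. $\mu$ is the Möbius function. (Elements of $B(g)$ encode CM types of a cyclic CM field of degree $2g$; the orbits of period $2g$ are exactly the equivalence classes of primitive CM types.) *)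

(* Defs.v *)
From mathcomp Require Import all_boot all_order all_algebra.
Set Implicit Arguments. Unset Strict Implicit. Unset Printing Implicit Defensive.
Import GRing.Theory Num.Theory.

Definition bstring (n : nat) := {ffun 'I_n -> bool}.

Definition shift n (k : nat) (s : bstring n) : bstring n :=
  [ffun i : 'I_n => s (Ordinal (ltn_pmod (i + k) (leq_ltn_trans (leq0n i) (ltn_ord i))))].

(* period: the smallest k in 1..n with shift k s = s (n itself always works). *)
Definition period n (s : bstring n) : nat :=
  nth n [seq k <- iota 1 n | shift k s == s] 0.

Definition Bset (g : nat) : {set bstring (2 * g)} :=
  [set s : bstring (2 * g) | [forall i : 'I_(2 * g), forall j : 'I_(2 * g),
     ((i < g) && (val j == val i + g)) ==> (s i != s j)]].

Definition orbit_shift n (s : bstring n) : {set bstring n} :=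
  [set shift k s | k : 'I_n].

Definition Eprime (g : nat) : {set {set bstring (2 * g)}} :=
  [set orbit_shift s | s in [set s in Bset g | period s == 2 * g]].

Definition Pcount (g : nat) : nat := #|[set s in Bset g | period s == 2 * g]|.

Definition moebius (n : nat) : int :=
  if (0 < n) && all (fun p => logn p n == 1) (primes n)
  then ((-1) ^+ size (primes n))%R else 0%R.

(* Main.v *)
Require Import Defs.
From mathcomp Require Import all_boot all_order all_algebra.
From mathcomp Require Import zify.
Import GRing.Theory Num.Theory.
Set Implicit Arguments. Unset Strict Implicit. Unset Printing Implicit Defensive.

Section Shift.
Variable n : nat.
Hypothesis n_gt0 : 0 < n.
Implicit Types s t u : bstring n.

Definition sn (s : bstring n) (j : nat) : bool := nth false (fgraph s) (j %% n).

Lemma snO (s : bstring n) (o : 'I_n) : sn s o = s o.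
Proof. have _ := n_gt0. by rewrite /sn modn_small // nth_fgraph_ord. Qed.

Lemma snm (s : bstring n) j : sn s (j %% n) = sn s j.
Proof. have _ := n_gt0. by rewrite /sn modn_mod. Qed.

Lemma snDn (s : bstring n) j : sn s (j + n) = sn s j.
Proof. have _ := n_gt0. by rewrite /sn modnDr. Qed.

Lemma snMDn (s : bstring n) c j : sn s (j + c * n) = sn s j.
Proof. have _ := n_gt0. by rewrite /sn addnC modnMDl. Qed.

Lemma sn_shift k (s : bstring n) j : sn (shift k s) j = sn s (j + k).
Proof. have _ := n_gt0.
have hj : j %% n < n by rewrite ltn_pmod.
rewrite -snm -[j %% n]/(nat_of_ord (Ordinal hj)) snO /shift ffunE.
rewrite -snO /= -snm modnDml; by rewrite !snm.
Qed.

Lemma eq_sn (s t : bstring n) : (forall j, sn s j = sn t j) -> s = t.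
Proof. have _ := n_gt0. by move=> h; apply/ffunP => i; rewrite -!snO h. Qed.

Definition cpl (s : bstring n) : bstring n := [ffun i => ~~ s i].

Lemma sn_cpl s j : sn (cpl s) j = ~~ sn s j.
Proof. have _ := n_gt0.
have hj : j %% n < n by rewrite ltn_pmod.
by rewrite -snm -[j %% n]/(nat_of_ord (Ordinal hj)) snO ffunE -snO /= snm.
Qed.

Lemma cplK s : cpl (cpl s) = s.
Proof. have _ := n_gt0. by apply: eq_sn => j; rewrite !sn_cpl negbK. Qed.

Lemma shiftD a b s : shift a (shift b s) = shift (b + a) s.
Proof. have _ := n_gt0. by apply: eq_sn => j; rewrite !sn_shift (addnC b) addnA. Qed.

Lemma shift_cpl k s : shift k (cpl s) = cpl (shift k s).
Proof. have _ := n_gt0. by apply: eq_sn => j; rewrite sn_shift !sn_cpl sn_shift. Qed.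

Lemma shift0 s : shift 0 s = s.
Proof. have _ := n_gt0. by apply: eq_sn => j; rewrite sn_shift addn0. Qed.

Lemma shiftMn c s : shift (c * n) s = s.
Proof. have _ := n_gt0. by apply: eq_sn => j; rewrite sn_shift snMDn. Qed.

Lemma shiftn s : shift n s = s.
Proof. have _ := n_gt0. by have := shiftMn 1 s; rewrite mul1n. Qed.

Lemma shift_mod k s : shift (k %% n) s = shift k s.
Proof. have _ := n_gt0. by apply: eq_sn => j; rewrite !sn_shift -snm modnDmr snm. Qed.

Lemma shift_inj k : injective (@shift n k).
Proof. have _ := n_gt0.
move=> s t h.
have e : forall u, shift (n - k %% n) (shift k u) = u.
  move=> u; rewrite -(shift_mod k u) shiftD subnKC; last by rewrite ltnW // ltn_pmod.
  by rewrite shiftn.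
by rewrite -(e s) h e.
Qed.

Lemma period_shift k s : period (shift k s) = period s.
Proof. have _ := n_gt0.
rewrite /period; congr nth; apply: eq_filter => m.
by rewrite shiftD addnC -shiftD (inj_eq (@shift_inj k)).
Qed.

Lemma periodP s : [/\ 0 < period s <= n, shift (period s) s = s &
  forall k, 0 < k < period s -> shift k s != s].
Proof. have _ := n_gt0.
have [l el] : {l | l = [seq k <- iota 1 n | shift k s == s]} by exists [seq k <- iota 1 n | shift k s == s].
have hp : period s = nth n l 0 by rewrite /period el.
have inl k : (k \in l) = (shift k s == s) && (0 < k <= n).
  by rewrite el mem_filter mem_iota add1n ltnS.
have nl : n \in l by rewrite inl shiftn eqxx n_gt0 leqnn.
have sl : sorted ltn l by rewrite el; apply: sorted_filter (iota_ltn_sorted 1 n); exact: ltn_trans.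
case: l el hp inl nl sl => // a l' _ hp inl _ sl.
have : a \in a :: l' by rewrite inE eqxx.
rewrite inl hp /= => /andP [/eqP ha hb].
split => //.
move=> k /andP [k0 kp]; apply/negP => /eqP ek.
have : k \in a :: l' by rewrite inl ek eqxx k0 /=; apply: leq_trans (ltnW kp) _; case/andP: hb.
rewrite inE => /orP [/eqP ka| kl'].
  by move: kp; rewrite ka ltnn.
have := order_path_min ltn_trans sl.
move/allP => /(_ k kl'); rewrite ltnNge (ltnW kp) //.
Qed.

Lemma shift_dvd s k : (shift k s == s) = (period s %| k).
Proof. have _ := n_gt0.
case: (periodP s) => /andP [p0 pn] ps pmin.
have fixM c : shift (c * period s) s = s.
  elim: c => [|c IH]; first by rewrite mul0n shift0.
  by rewrite mulSn -shiftD ps IH.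
apply/eqP/idP => [ek|/dvdnP [c ->]]; last exact: fixM.
have e : shift k s = shift (k %% period s) s.
  by rewrite {1}(divn_eq k (period s)) -shiftD fixM.
rewrite /dvdn; apply/negPn/negP => hr.
have := pmin (k %% period s); rewrite lt0n hr ltn_pmod //= -e ek eqxx.
by move/(_ isT).
Qed.

Lemma period_dvd s : period s %| n.
Proof. have _ := n_gt0. by rewrite -shift_dvd shiftn. Qed.

Lemma orbit_sub s t : t \in orbit_shift s -> orbit_shift t \subset orbit_shift s.
Proof. have _ := n_gt0.
case/imsetP => k _ ->; apply/subsetP => u /imsetP [j _ ->].
rewrite shiftD -shift_mod; apply/imsetP.
by exists (Ordinal (ltn_pmod (k + j) n_gt0)).
Qed.

Lemma self_orbit s : s \in orbit_shift s.
Proof. have _ := n_gt0. by apply/imsetP; exists (Ordinal n_gt0) => //; rewrite shift0. Qed.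

Lemma orbit_sym s t : t \in orbit_shift s -> s \in orbit_shift t.
Proof. have _ := n_gt0.
case/imsetP => k _ ->; apply/imsetP.
exists (Ordinal (ltn_pmod (n - k) n_gt0)) => //=.
rewrite shift_mod shiftD subnKC ?shiftn //; exact: ltnW (ltn_ord k).
Qed.

Lemma orbit_eq s t : t \in orbit_shift s -> orbit_shift t = orbit_shift s.
Proof. have _ := n_gt0. by move=> h; apply/eqP; rewrite eqEsubset !orbit_sub // orbit_sym. Qed.

Lemma card_orbit s : period s = n -> #|orbit_shift s| = n.
Proof. have _ := n_gt0.
move=> pn; rewrite card_imset ?card_ord //.
move=> i j; wlog lij : i j / i <= j.
  move=> W h; case: (leqP i j) => [l|l]; first exact: W.
  by apply/esym; apply: W; [exact: ltnW | exact/esym].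
move=> h; apply/val_inj/eqP; rewrite eqn_leq lij /= leqNgt; apply/negP => lt.
have : shift (j - i) (shift i s) == shift i s.
  by rewrite shiftD subnKC // h.
rewrite shift_dvd period_shift pn => /dvdn_leq.
rewrite subn_gt0 => /(_ lt).
rewrite leqNgt (leq_ltn_trans (leq_subr i j) (ltn_ord j)) //.
Qed.

End Shift.

Lemma snO' n (n0 : 0 < n) (s : bstring n) j (hj : j < n) : sn s j = s (Ordinal hj).
Proof. by rewrite -(snO n0). Qed.

Lemma BsetE g (s : bstring (2 * g)) : 0 < g -> (s \in Bset g) = (shift g s == cpl s).
Proof.
move=> g0; have n0 : 0 < 2 * g by rewrite muln_gt0.
rewrite inE; apply/forallP/eqP => [H|H].
  apply: (eq_sn n0) => j; rewrite (sn_shift n0) (sn_cpl n0).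
  rewrite -(snm n0 s (j + g)) -modnDml (snm n0) -(snm n0 s j).
  have hr : j %% (2 * g) < 2 * g by rewrite ltn_pmod.
  move: (j %% (2 * g)) hr => r hr.
  case: (ltnP r g) => rg.
    have hrg : r + g < 2 * g by rewrite mul2n -addnn ltn_add2r.
    have := H (Ordinal hr); move/forallP => /(_ (Ordinal hrg)); rewrite /= rg eqxx /=.
    by rewrite (snO' n0 s hr) (snO' n0 s hrg); case: (s _); case: (s _).
  have e : r + g = (r - g) + 2 * g by rewrite mul2n -addnn addnA subnK.
  have hrg : r - g < 2 * g by apply: leq_ltn_trans (leq_subr g r) hr.
  have hrg' : r - g < g by rewrite ltn_subLR // addnn -mul2n.
  rewrite e (snDn n0).
  have := H (Ordinal hrg); move/forallP => /(_ (Ordinal hr)); rewrite /= hrg' subnK //= eqxx /=.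
  by rewrite (snO' n0 s hr) (snO' n0 s hrg); case: (s _); case: (s _).
move=> i; apply/forallP => j; apply/implyP => /andP [ig /eqP ji].
have := congr1 (fun t => sn t i) H; rewrite /= (sn_shift n0) (sn_cpl n0) -ji !(snO n0).
by case: (s _); case: (s _).
Qed.

Lemma S_closed g (s t : bstring (2 * g)) : 0 < g ->
  s \in [set s in Bset g | period s == 2 * g] -> t \in orbit_shift s ->
  t \in [set s in Bset g | period s == 2 * g].
Proof.
move=> g0; have n0 : 0 < 2 * g by rewrite muln_gt0.
move=> /setIdP [hb hp] /imsetP [k _ ->]; apply/setIdP; split; last by rewrite (period_shift n0).
move: hb; rewrite !BsetE // => /eqP hb.
by rewrite shiftD // addnC -shiftD // hb shift_cpl.
Qed.

Lemma card_Eprime g : 0 < g -> Pcount g = #|Eprime g| * (2 * g).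
Proof.
move=> g0; have n0 : 0 < 2 * g by rewrite muln_gt0.
rewrite /Pcount (card_partition (P := Eprime g)).
  rewrite -sum_nat_const; apply: eq_bigr => A /imsetP [s hs ->].
  by apply: card_orbit => //; case/setIdP: hs => _ /eqP.
apply/and3P; split.
- apply/eqP/setP => x; apply/bigcupP/idP.
    by case=> B /imsetP [s hs ->] hx; apply: S_closed hx.
  move=> hx; exists (orbit_shift x); first by apply: imset_f.
  exact: self_orbit.
- apply/trivIsetP => A B /imsetP [s hs ->] /imsetP [t ht ->] neq.
  rewrite disjoints_subset; apply/subsetP => x xs; rewrite inE; apply/negP => xt; move: neq.
  by rewrite -(orbit_eq n0 xs) -(orbit_eq n0 xt) eqxx.
- apply/imsetP => [[s hs e]]; have := self_orbit n0 s; by rewrite -e inE.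
Qed.

Lemma moeb1 : moebius 1 = 1%R.
Proof. by rewrite /moebius /=. Qed.

Lemma moeb0 p x : prime p -> p * p %| x -> moebius x = 0%R.
Proof.
move=> pp hd; rewrite /moebius; case: ifP => // /andP [x0 /allP H].
have px : p \in primes x by rewrite mem_primes pp x0 (dvdn_trans (dvdn_mulr p (dvdnn p)) hd).
have := H p px; move: hd; rewrite mulnn pfactor_dvdn // => h /eqP e.
by move: h; rewrite e.
Qed.

Lemma moebM p d : prime p -> 0 < d -> ~~ (p %| d) -> moebius (p * d) = (- moebius d)%R.
Proof.
move=> pp d0 pnd.
have p0 := prime_gt0 pp.
have pd0 : 0 < p * d by rewrite muln_gt0 p0.
have ep : primes (p * d) =i p :: primes d.
  by move=> q; rewrite primesM // primes_prime // !inE.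
have hp : p \notin primes d by rewrite mem_primes (negbTE pnd) !andbF.
have sz : size (primes (p * d)) = (size (primes d)).+1.
  have u : uniq (p :: primes d) by rewrite /= hp primes_uniq.
  by rewrite (perm_size (uniq_perm (primes_uniq _) u ep)).
have lpd : logn p d = 0.
  by apply/eqP; rewrite -leqn0 leqNgt logn_gt0 (negbTE hp).
have al : all (fun q => logn q (p * d) == 1) (primes (p * d)) =
          all (fun q => logn q d == 1) (primes d).
  rewrite (eq_all_r ep) /= lognM // logn_prime // eqxx lpd /=.
  apply: eq_in_all => q hq; rewrite lognM // logn_prime //.
  have : q != p by apply: contraNneq hp => <-.
  by move/negbTE => ->.
rewrite /moebius pd0 d0 /= al sz; case: ifP => _; last by rewrite oppr0.
by rewrite exprS mulN1r.
Qed.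

Lemma moeb_sum n : 0 < n -> (\sum_(d <- divisors n) moebius d = (n == 1)%:R)%R.
Proof.
move=> n0; case: (ltngtP n 1) => [|n1|->]; first by rewrite ltnNge n0.
  2: by rewrite /= big_seq1 moeb1.
set p := pdiv n.
have pp : prime p by apply: pdiv_prime.
have p0 := prime_gt0 pp.
have pn : p %| n by apply: pdiv_dvd.
have np0 : 0 < n %/ p by rewrite divn_gt0 // dvdn_leq.
rewrite (bigID (fun d => p %| d)) /= -big_filter.
have pe : perm_eq [seq d <- divisors n | p %| d] [seq p * y | y <- divisors (n %/ p)].
  apply: uniq_perm; first by rewrite filter_uniq // divisors_uniq.
    rewrite map_inj_uniq ?divisors_uniq //.
    by move=> a b /eqP; rewrite eqn_pmul2l // => /eqP.
  move=> x; rewrite mem_filter -dvdn_divisors //; apply/andP/mapP.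
    case=> /dvdnP [y ->] hx; exists y; last by rewrite mulnC.
    by rewrite -dvdn_divisors // dvdn_divRL.
  case=> y; rewrite -dvdn_divisors // dvdn_divRL // => hy ->.
  by rewrite dvdn_mulr // mulnC.
rewrite (perm_big _ pe) big_map (bigID (fun y => p %| y)) /=.
rewrite big1 ?add0r; last by move=> y hy; apply: (moeb0 pp); rewrite dvdn_pmul2l.
rewrite big_seq_cond (eq_bigr (fun y => - moebius y)%R); last first.
  move=> y /andP [hy hpy]; apply: moebM => //.
  by move: hy; rewrite -dvdn_divisors // => /(dvdn_gt0 np0).
rewrite sumrN -big_seq_cond.
have pe2 : perm_eq [seq d <- divisors n | ~~ (p %| d)] [seq d <- divisors (n %/ p) | ~~ (p %| d)].
  apply: uniq_perm; try by rewrite filter_uniq // divisors_uniq.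
  move=> x; rewrite !mem_filter -!dvdn_divisors //.
  case hx: (p %| x) => //=.
  rewrite dvdn_divRL // Gauss_dvd ?pn ?andbT //.
  by rewrite coprime_sym prime_coprime // hx.
by rewrite -(big_filter (divisors n)) -(big_filter (divisors (n %/ p))) (perm_big _ pe2) addNr.
Qed.

Section Ext.
Variables (n e c : nat).
Hypotheses (e0 : 0 < e) (c0 : 0 < c) (hn : n = e * (2 * c)).

Lemma n0 : 0 < n.
Proof. by rewrite hn !muln_gt0 e0 c0. Qed.

Definition ext (t : bstring e) : bstring n :=
  [ffun i : 'I_n => addb (t (Ordinal (ltn_pmod i e0))) (odd (i %/ e))].

Definition res (s : bstring n) : bstring e := [ffun i : 'I_e => sn s i].

Lemma sn_ext t j : sn (ext t) j = addb (t (Ordinal (ltn_pmod j e0))) (odd (j %/ e)).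
Proof.
have hj : j %% n < n by rewrite ltn_pmod // n0.
rewrite -(snm n0) -[j %% n]/(nat_of_ord (Ordinal hj)) (snO n0) ffunE /=.
have en : e %| n by rewrite hn dvdn_mulr.
have -> : Ordinal (ltn_pmod (j %% n) e0) = Ordinal (ltn_pmod j e0).
  by apply: val_inj => /=; rewrite modn_dvdm.
congr addb.
rewrite [in RHS](divn_eq j n) [in X in _ = odd ((_ * X + _) %/ _)]hn mulnA mulnAC divnMDl // oddD oddM /= mul2n odd_double.
by rewrite andbF.
Qed.

Lemma ext_in t : shift e (ext t) = cpl (ext t).
Proof.
apply: (eq_sn n0) => j; rewrite (sn_shift n0) (sn_cpl n0) !sn_ext.
have -> : Ordinal (ltn_pmod (j + e) e0) = Ordinal (ltn_pmod j e0).
  by apply: val_inj => /=; rewrite modnDr.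
have -> : (j + e) %/ e = 1 + j %/ e by rewrite addnC -{1}[e]mul1n divnMDl.
by rewrite oddD /= addbN.
Qed.

Lemma ext_res s : shift e s = cpl s -> ext (res s) = s.
Proof.
move=> h.
have st j : sn s (j + e) = ~~ sn s j.
  by rewrite -(sn_shift n0) h (sn_cpl n0).
have sq q r : sn s (r + q * e) = addb (sn s r) (odd q).
  elim: q => [|q IH]; first by rewrite mul0n addn0 addbF.
  by rewrite mulSnr addnA st IH /= addbN.
apply: (eq_sn n0) => j; rewrite sn_ext ffunE /=.
by rewrite {3}(divn_eq j e) addnC sq.
Qed.

Lemma ext_inj : injective ext.
Proof.
move=> t1 t2 h; apply/ffunP => i.
have ti (t : bstring e) : t i = sn (ext t) i.
  rewrite sn_ext divn_small // addbF.
  have -> : Ordinal (ltn_pmod i e0) = i by apply: val_inj; rewrite /= modn_small.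
  by [].
by rewrite !ti h.
Qed.

Lemma card_anti : #|[set s : bstring n | shift e s == cpl s]| = 2 ^ e.
Proof.
have -> : [set s : bstring n | shift e s == cpl s] = ext @: setT.
  apply/setP => s; rewrite inE; apply/eqP/imsetP => [h|[t _ ->]].
    by exists (res s) => //; rewrite ext_res.
  exact: ext_in.
by rewrite card_imset; [rewrite cardsT card_ffun card_bool card_ord | exact: ext_inj].
Qed.

End Ext.

Lemma card_sum (T : finType) (A : {set T}) (f : T -> nat) (r : seq nat) :
  uniq r -> (forall s, s \in A -> f s \in r) ->
  #|A| = \sum_(x <- r) #|[set s in A | f s == x]|.
Proof.
move=> ur hr.
have e x : #|[set s in A | f s == x]| = \sum_(s in A) (f s == x : nat).
  rewrite -sum1_card big_mkcond [RHS]big_mkcond /=; apply: eq_bigr => s _.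
  by rewrite !inE; case: (s \in A); case: (f s == x).
rewrite (eq_bigr _ (fun x _ => e x)) exchange_big /= -sum1_card.
apply: eq_bigr => s hs.
have := count_uniq_mem (f s) ur; rewrite (hr s hs) /= => <-.
rewrite -sum1_count big_mkcond /=.
apply: eq_bigr => x _; rewrite eq_sym; by case: (x == f s).
Qed.

Lemma period_B g (s : bstring (2 * g)) : 0 < g -> s \in Bset g ->
  [/\ 0 < period s, 2 * g = (2 * g %/ period s) * period s,
      odd (2 * g %/ period s), 2 * g %/ period s %| g &
      period s = 2 * g %/ (2 * g %/ period s)].
Proof.
move=> g0 hB; have n0 : 0 < 2 * g by rewrite muln_gt0.
case: (periodP n0 s) => /andP [p0 pn] _ _.
have pd := period_dvd n0 s.
move: hB; rewrite BsetE // => /eqP hb.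
have npg : ~~ (period s %| g).
  rewrite -(shift_dvd n0) hb; apply/eqP => h.
  by have := congr1 (fun t => sn t 0) h; rewrite /= (sn_cpl n0); case: (sn s 0).
set q := 2 * g %/ period s.
have e2 : 2 * g = q * period s by rewrite divnK.
have oq : odd q.
  apply/negPn/negP => eq; have := odd_double_half q; rewrite (negbTE eq) add0n -muln2 => hq.
  have eg : g = q./2 * period s by nia.
  by move: npg; rewrite {2}eg dvdn_mull.
have q0 : 0 < q by move: n0; rewrite e2 muln_gt0 => /andP [].
split => //.
  by rewrite -(Gauss_dvdr _ (_ : coprime q 2)) ?coprimen2 // dvdn_div.
by apply/esym; rewrite [in LHS]e2 mulKn.
Qed.

Lemma shift_addmul n (n0 : 0 < n) (s : bstring n) k m d :
  shift d s = s -> shift (m * d + k) s = shift k s.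
Proof.
move=> hd; rewrite -(shiftD n0); congr shift.
by apply/eqP; rewrite (shift_dvd n0) dvdn_mull // -(shift_dvd n0) hd.
Qed.

Lemma LA g q : 0 < g -> odd q -> q %| g ->
  #|[set s in Bset g | period s %| 2 * (g %/ q)]| = 2 ^ (g %/ q).
Proof.
move=> g0 oq hq; have n0 : 0 < 2 * g by rewrite muln_gt0.
have q0 : 0 < q by apply: odd_gt0.
set e := g %/ q.
have e0 : 0 < e by rewrite divn_gt0 // dvdn_leq.
have hg : g = e * q by rewrite divnK.
have eg : g = q./2 * (2 * e) + e.
  have := odd_double_half q; rewrite oq -muln2 => hq2; nia.
rewrite -(@card_anti (2 * g) e q) //; last by nia.
apply: eq_card => s; rewrite [in RHS]inE.
have sg : shift (2 * e) s = s -> shift g s = shift e s.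
  by move=> h; have := shift_addmul n0 e (q./2) h; rewrite -eg.
apply/setIdP/eqP => [[hb hp]|h].
  have s2 : shift (2 * e) s = s by apply/eqP; rewrite (shift_dvd n0).
  by move: hb; rewrite BsetE // sg // => /eqP.
have s2 : shift (2 * e) s = s.
  by have := shiftD n0 e e s; rewrite h (shift_cpl n0) h (cplK n0) addnn -mul2n => /esym.
split; last by rewrite -(shift_dvd n0) s2.
by rewrite BsetE // sg // h.
Qed.

Lemma divn_inv m y : 0 < m -> y %| m -> m %/ (m %/ y) = y.
Proof.
move=> m0 /dvdnP [k hm]; subst m; move: (m0); rewrite muln_gt0 => /andP [k0 y0].
by rewrite mulnK // mulKn.
Qed.

Lemma dvd_aux g q y : 0 < q -> 0 < y -> q %| y -> y %| g -> (2 * g %/ y) %| 2 * (g %/ q).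
Proof.
move=> q0 y0 /dvdnP [b hb] /dvdnP [a ->]; subst y.
rewrite (mulnA 2 a) mulnK // (mulnA a b q) mulnK // mulnA dvdn_mulr //.
Qed.

Lemma dvd_aux2 g q p y : 0 < p -> 0 < q -> p * y = 2 * g -> q %| g -> p %| 2 * (g %/ q) -> q %| y.
Proof.
move=> p0 q0 hpy /dvdnP [c hc]; subst g; rewrite mulnK // => /dvdnP [k hk].
have : y = k * q.
  apply/eqP; rewrite -(eqn_pmul2l p0) hpy; apply/eqP; nia.
by move=> ->; rewrite dvdn_mull.
Qed.

Lemma LB g q : 0 < g -> odd q -> q %| g ->
  #|[set s in Bset g | period s %| 2 * (g %/ q)]| =
  \sum_(y <- [seq x <- divisors g | odd x] | q %| y)
     #|[set s in Bset g | period s == 2 * g %/ y]|.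
Proof.
move=> g0 oq hq; have n0 : 0 < 2 * g by rewrite muln_gt0.
have q0 : 0 < q by apply: odd_gt0.
rewrite -big_filter.
rewrite (@card_sum _ _ (fun s => 2 * g %/ period s) [seq y <- [seq x <- divisors g | odd x] | q %| y]).
- rewrite big_seq [RHS]big_seq; apply: eq_bigr => y.
  rewrite !mem_filter -dvdn_divisors // => /and3P [qy oy yg].
  have y0 : 0 < y by apply: odd_gt0.
  apply: eq_card => s; apply/setIdP/setIdP => [[/setIdP [hb hp] /eqP hf]|[hb /eqP hp]].
    case: (period_B g0 hb) => p0 e2 _ _ ->; split => //; by rewrite hf.
  split; last by rewrite hp divn_inv // (dvdn_trans yg) // dvdn_mull.
  apply/setIdP; split => //; rewrite hp; exact: dvd_aux.
- by rewrite !filter_uniq // divisors_uniq.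
move=> s /setIdP [hb hp].
case: (period_B g0 hb) => p0 e2 oq' qg _.
rewrite !mem_filter oq' -dvdn_divisors // qg andbT andbT.
apply: (dvd_aux2 p0 q0 _ hq hp).
by rewrite mulnC -e2.
Qed.

Local Open Scope ring_scope.

Lemma Pcount_formula (g : nat) : (0 < g)%N ->
  (Pcount g)%:R = \sum_(x <- divisors g | odd x) (moebius x)%:~R * (2 ^ (g %/ x))%:R :> rat.
Proof.
move=> g0.
set D := [seq x <- divisors g | odd x].
set G := fun y => #|[set s in Bset g | period s == (2 * g %/ y)%N]|.
have uD : uniq D by rewrite filter_uniq // divisors_uniq.
have memD x : (x \in D) = odd x && (x %| g)%N by rewrite mem_filter dvdn_divisors.
rewrite -big_filter -/D big_seq.
rewrite (eq_bigr (fun x => \sum_(y <- D) (if (x %| y)%N then (moebius x)%:~R * (G y)%:R else 0))); last first.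
  move=> x; rewrite memD => /andP [ox xg].
  rewrite -(LA g0 ox xg) (LB g0 ox xg) natr_sum mulr_sumr big_mkcond /=.
  by apply: eq_bigr => y _; case: ifP.
rewrite -big_seq exchange_big /=.
rewrite big_seq (eq_bigr (fun y => ((y == 1)%N)%:R * (G y)%:R)); last first.
  move=> y; rewrite memD => /andP [oy yg].
  rewrite -big_mkcond /= -mulr_suml.
  have y0 : (0 < y)%N by apply: odd_gt0.
  have pe : perm_eq [seq x <- D | (x %| y)%N] (divisors y).
    apply: uniq_perm; first by rewrite filter_uniq.
      exact: divisors_uniq.
    move=> x; rewrite mem_filter memD -dvdn_divisors //.
    case xy: (x %| y)%N; rewrite ?andbF //= (dvdn_trans xy yg) andbT.
    apply/negPn/negP => ex.
    have : (2 %| y)%N by rewrite (dvdn_trans _ xy) // dvdn2 ex.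
    by rewrite dvdn2 oy.
  rewrite -big_filter (perm_big _ pe) -rmorph_sum /= moeb_sum //.
  by case: (y == 1)%N.
rewrite -big_seq (bigD1_seq 1) /=; last exact: uD.
  rewrite big1_seq ?addr0; first by rewrite mul1r /G divn1.
  by move=> y /andP [/negbTE -> _]; rewrite mul0r.
by rewrite memD /= dvd1n.
Qed.


Unset Implicit Arguments.
Theorem mainTheorem2 (g : nat) (hg : (1 <= g)%N) :
  (#|Eprime g|%:R : rat) = (Pcount g)%:R / (2 * g)%:R /\
  (#|Eprime g|%:R : rat) =
    ((2 * g)%:R)^-1 *
      \sum_(x <- divisors g | odd x) (moebius x)%:~R * (2 ^ (g %/ x))%:R.
Proof.
have h1 : (#|Eprime g|%:R : rat) = (Pcount g)%:R / (2 * g)%:R.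
  rewrite (card_Eprime hg) natrM mulfK // pnatr_eq0 -lt0n muln_gt0 hg.
  by [].
split => //.
by rewrite -Pcount_formula // mulrC.
Qed.
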